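(* Consider the ODE $$w_r=\frac{2w^3+2w-\sqrt3(1+w^2)^{3/2}}{r},\qquad r>0.$$ Its solutions are, up to restriction to subintervals, exactly the following: (1) the constant $w\equiv\sqrt3$; (2) for each $\rho_0>0$, $w(r)=\dfrac{r^2+\frac{\sqrt3}{2}\rho_0^2}{\sqrt{\rho_0^4-(r^2+\frac{\sqrt3}{2}\rho_0^2)^2}}$ on $0<r<r_0:=\sqrt{\frac{2-\sqrt3}{2}}\rho_0$; it satisfies $w>\sqrt3$, $w(r)\to\sqrt3$ as $r\to0$, $w(r)\to+\infty$ as $r\to r_0$, and for fixed $r$, $w(r)\to\sqrt3$ as $\rho_0\to\infty$; (3) for each $a>0$ (equivalently $\rho_0>0$ with $a^2=\frac{\sqrt3}{2}\rho_0^2$), $w(r)=\dfrac{-\sqrt3(r^2-a^2)}{\sqrt{4a^4-3(r^2-a^2)^2}}=\dfrac{-(r^2-\frac{\sqrt3}{2}\rho_0^2)}{\sqrt{\rho_0^4-(r^2-\frac{\sqrt3}{2}\rho_0^2)^2}}$ on $0<r<b:=\sqrt{\frac{2+\sqrt3}{\sqrt3}}\,a=\sqrt{\frac{2+\sqrt3}{2}}\rho_0$; it satisfies $w(a)=0$, $w<\sqrt3$, $w(r)\to\sqrt3$ as $r\to0$, $w(r)\to-\infty$ as $r\to b$, and for fixed $r$, $w(r)\to\sqrt3$ as $a\to\infty$.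
   Context: This ODE arises from $v_r=\frac{2v^3+3r^2v-\sqrt3(v^2+r^2)^{3/2}}{r^3}$ with $v=u_r$, $w=v/r$, for rotationally symmetric absolute $E_1$-minimizing graphs $t=u(r)$ in the Heisenberg group. *)

(* Defs.v *)
From Stdlib Require Import Reals.
From Coquelicot Require Import Coquelicot.
Open Scope R_scope.

Definition Fode (w : R) : R :=
  2 * w ^ 3 + 2 * w - sqrt 3 * sqrt ((1 + w ^ 2) ^ 3).

Definition sol_on (a b : Rbar) (w : R -> R) : Prop :=
  forall r : R, Rbar_lt a r -> Rbar_lt r b -> is_derive w r (Fode (w r) / r).

Definition adm_interval (a b : Rbar) : Prop :=
  Rbar_le (Finite 0) a /\ Rbar_lt a b.

Definition w2 (rho0 r : R) : R :=
  (r ^ 2 + sqrt 3 / 2 * rho0 ^ 2) /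
  sqrt (rho0 ^ 4 - (r ^ 2 + sqrt 3 / 2 * rho0 ^ 2) ^ 2).
Definition r0 (rho0 : R) : R := sqrt ((2 - sqrt 3) / 2) * rho0.

Definition w3 (a r : R) : R :=
  - sqrt 3 * (r ^ 2 - a ^ 2) / sqrt (4 * a ^ 4 - 3 * (r ^ 2 - a ^ 2) ^ 2).
Definition w3rho (rho0 r : R) : R :=
  - (r ^ 2 - sqrt 3 / 2 * rho0 ^ 2) /
  sqrt (rho0 ^ 4 - (r ^ 2 - sqrt 3 / 2 * rho0 ^ 2) ^ 2).
Definition bnd (a : R) : R := sqrt ((2 + sqrt 3) / sqrt 3) * a.
Definition bnd_rho (rho0 : R) : R := sqrt ((2 + sqrt 3) / 2) * rho0.

(* Main.v *)
Require Import Defs.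
From Stdlib Require Import Reals Lra Psatz.
From Coquelicot Require Import Coquelicot.
Open Scope R_scope.

Definition Sf (s : R) : R := s / sqrt (1 - s ^ 2).
Definition Wk (K r : R) : R := Sf (K * r ^ 2 + sqrt 3 / 2).

Lemma s3_pos : 0 < sqrt 3.
Proof. apply sqrt_lt_R0; lra. Qed.
Lemma s3_sq : sqrt 3 * sqrt 3 = 3.
Proof. apply sqrt_sqrt; lra. Qed.
Lemma s3_lt2 : sqrt 3 < 2.
Proof. pose proof s3_pos; pose proof s3_sq; nra. Qed.
Lemma s3_gt1 : 1 < sqrt 3.
Proof. pose proof s3_pos; pose proof s3_sq; nra. Qed.

Lemma sqrt_cube (x : R) : 0 <= x -> sqrt (x ^ 3) = sqrt x ^ 3.
Proof.
  intros Hx. replace (x ^ 3) with ((sqrt x ^ 3) ^ 2).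
  - apply sqrt_pow2. apply pow_le, sqrt_pos.
  - rewrite <- pow_mult. replace (3 * 2)%nat with (2 * 3)%nat by lia.
    rewrite pow_mult. rewrite pow2_sqrt; auto.
Qed.

Lemma S_ratio (N D X : R) : 0 < D -> X = D ^ 2 - N ^ 2 -> Sf (N / D) = N / sqrt X.
Proof.
  intros HD HX. unfold Sf.
  replace (1 - (N / D) ^ 2) with (X / D ^ 2) by (subst; field; lra).
  rewrite sqrt_div_alt by (apply pow_lt; lra).
  rewrite sqrt_pow2 by lra. unfold Rdiv.
  rewrite Rinv_mult, Rinv_inv.
  replace (N * / D * (/ sqrt X * D)) with (N * / sqrt X * (D * / D)) by ring.
  rewrite Rinv_r by lra. ring.
Qed.

Lemma S_c : Sf (sqrt 3 / 2) = sqrt 3.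
Proof.
  unfold Sf. pose proof s3_sq; pose proof s3_pos.
  replace (1 - (sqrt 3 / 2) ^ 2) with (/2 * /2) by (simpl; nra).
  rewrite sqrt_square by lra. field.
Qed.

Lemma S_inv (v : R) :
  let s := v / sqrt (1 + v ^ 2) in -1 < s < 1 /\ Sf s = v.
Proof.
  intros s. assert (HT : 0 < sqrt (1 + v ^ 2)) by (apply sqrt_lt_R0; nra).
  set (T := sqrt (1 + v ^ 2)) in *.
  assert (HT2 : T * T = 1 + v ^ 2) by (apply sqrt_sqrt; nra).
  assert (Hs2 : 1 - s ^ 2 = / T * / T).
  { unfold s. replace ((v / T) ^ 2) with (v ^ 2 / (T * T)) by (field; lra). replace (v ^ 2) with (T * T - 1) by lra. field. lra. }
  split.
  - assert (s ^ 2 < 1).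
    { assert (0 < / T * / T) by (apply Rmult_lt_0_compat; apply Rinv_0_lt_compat; lra). lra. }
    nra.
  - unfold Sf. rewrite Hs2, sqrt_square by (left; apply Rinv_0_lt_compat; lra).
    unfold s. field. lra.
Qed.

Lemma Wk_derive (K r : R) : 0 < r -> -1 < K * r ^ 2 + sqrt 3 / 2 < 1 ->
  is_derive (Wk K) r (Fode (Wk K r) / r).
Proof.
  intros Hr Hs. set (s := K * r ^ 2 + sqrt 3 / 2) in *.
  assert (HU2 : 0 < 1 - s ^ 2) by nra.
  assert (HU : 0 < sqrt (1 - s ^ 2)) by (apply sqrt_lt_R0; lra).
  set (U := sqrt (1 - s ^ 2)) in *.
  assert (HUU : U * U = 1 - s ^ 2) by (apply sqrt_sqrt; lra).
  assert (key : 2 * s ^ 3 + 2 * s * (U * U) - sqrt 3 = 2 * K * r ^ 2)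
    by (rewrite HUU; unfold s; field).
  assert (E : Fode (Wk K r) / r = 2 * K * r / U ^ 3).
  { unfold Fode, Wk, Sf. fold s. fold U.
    replace (1 + (s / U) ^ 2) with (/ U ^ 2) by (replace ((s / U) ^ 2) with (s ^ 2 / (U * U)) by (field; lra); replace (s ^ 2) with (1 - U * U) by lra; field; lra).
    rewrite sqrt_cube by (left; apply Rinv_0_lt_compat, pow_lt; lra).
    rewrite <- Rsqr_pow2, <- Rsqr_inv', sqrt_Rsqr by (left; apply Rinv_0_lt_compat; lra).
    transitivity ((2 * s ^ 3 + 2 * s * (U * U) - sqrt 3) / (r * U ^ 3)).
    - field. lra.
    - rewrite key. field. lra. }
  rewrite E. unfold Wk, Sf.
  auto_derive;
  replace (K * (r * (r * 1)) + sqrt 3 / 2) with s by (unfold s; ring);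
  replace (1 + - (s * (s * 1))) with (1 - s ^ 2) by ring; fold U.
  - repeat split; lra.
  - transitivity (2 * K * r * (U * U + s ^ 2) / U ^ 3); [field; lra | rewrite HUU; field; lra].
Qed.

Lemma Q_derive (w : R -> R) (r : R) : 0 < r -> is_derive w r (Fode (w r) / r) ->
  is_derive (fun t => (w t / sqrt (1 + w t ^ 2) - sqrt 3 / 2) / t ^ 2) r 0.
Proof.
  intros Hr Hd.
  assert (Hex : ex_derive w r) by (eexists; exact Hd).
  assert (HD : Derive w r = Fode (w r) / r) by (apply is_derive_unique; exact Hd).
  set (v := w r) in *.
  assert (HT : 0 < sqrt (1 + v ^ 2)) by (apply sqrt_lt_R0; nra).
  assert (HF : Fode v = 2 * v * (sqrt (1 + v ^ 2) * sqrt (1 + v ^ 2)) - sqrt 3 * sqrt (1 + v ^ 2) ^ 3).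
  { unfold Fode. rewrite sqrt_cube by nra. rewrite sqrt_sqrt by nra. ring. }
  set (T := sqrt (1 + v ^ 2)) in *.
  assert (HTT : T * T = 1 + v ^ 2) by (apply sqrt_sqrt; nra).
  change (fun x => w x) with w.
  auto_derive; fold v; replace (1 + v * (v * 1)) with (1 + v ^ 2) by ring; fold T.
  - repeat split; auto; nra.
  - change (Derive (fun x => w x) r) with (Derive w r). rewrite HD, HF.
    transitivity (((2 * v * (T * T) - sqrt 3 * T ^ 3) / r * (T * T - v ^ 2)) / (T ^ 3 * r ^ 2) + (v / T - sqrt 3 / 2) * (-2) / r ^ 3).
    + field. lra.
    + replace (T * T - v ^ 2) with 1 by lra. field. lra.
Qed.

Lemma Rbar_bound (a : R) (b : Rbar) (c : R) : Rbar_lt a b ->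
  (forall r, a < r -> Rbar_lt r b -> r < c) -> Rbar_le b c.
Proof.
  intros Hab H. destruct b as [b| |]; simpl in *.
  - destruct (Rle_dec b c) as [h|h]; auto.
    assert (Hm : (Rmax a c + b) / 2 < c).
    { apply H. - pose proof (Rmax_l a c). pose proof (Rmax_lub_lt a c b Hab). lra.
      - pose proof (Rmax_lub_lt a c b Hab). simpl. lra. }
    pose proof (Rmax_r a c). pose proof (Rmax_lub_lt a c b Hab). lra.
  - assert (Hm : Rmax a c + 1 < c) by (apply H; simpl; auto; pose proof (Rmax_l a c); lra).
    pose proof (Rmax_r a c). lra.
  - auto.
Qed.

Lemma pick (a : R) (b : Rbar) : Rbar_lt a b -> exists x, a < x /\ Rbar_lt x b.
Proof.
  intros H. destruct b as [b| |]; simpl in *.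
  - exists ((a + b) / 2). simpl. lra.
  - exists (a + 1). simpl. split; auto; lra.
  - contradiction.
Qed.

Definition Qf (w : R -> R) (t : R) := (w t / sqrt (1 + w t ^ 2) - sqrt 3 / 2) / t ^ 2.

Lemma Q_const (a : R) (b : Rbar) (w : R -> R) : 0 <= a -> sol_on a b w ->
  forall x y, a < x -> Rbar_lt x b -> a < y -> Rbar_lt y b -> x <= y -> Qf w x = Qf w y.
Proof.
  intros Ha Hs x y Hx Hxb Hy Hyb Hxy.
  destruct (Req_dec x y) as [E|E]; [subst; auto|].
  apply eq_is_derive; [|lra].
  intros t Ht. apply (Q_derive w t); [lra|].
  apply Hs; [simpl; lra|].
  apply Rbar_le_lt_trans with y; [simpl; lra|auto].
Qed.

Lemma classify (a : R) (b : Rbar) (w : R -> R) : 0 <= a -> Rbar_lt a b -> sol_on a b w ->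
  exists K, forall r, a < r -> Rbar_lt r b ->
    -1 < K * r ^ 2 + sqrt 3 / 2 < 1 /\ w r = Wk K r.
Proof.
  intros Ha Hab Hs. destruct (pick a b Hab) as [x [Hx Hxb]].
  exists (Qf w x). intros r Hr Hrb.
  assert (HQ : Qf w r = Qf w x).
  { destruct (Rle_dec r x).
    - apply (Q_const a b w); auto.
    - symmetry. apply (Q_const a b w); auto. apply Rnot_le_lt in n. lra. }
  destruct (S_inv (w r)) as [Hb Hv].
  assert (Es : w r / sqrt (1 + w r ^ 2) = Qf w x * r ^ 2 + sqrt 3 / 2).
  { rewrite <- HQ. unfold Qf. field. split; [apply Rgt_not_eq, sqrt_lt_R0; nra | lra]. }
  rewrite Es in Hb, Hv. split; auto.
Qed.

Lemma to_at_right {T} (F : (T -> Prop) -> Prop) {FF : Filter F} (h : T -> R) :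
  filterlim h F (locally 0) -> F (fun x => 0 < h x) -> filterlim h F (at_right 0).
Proof.
  intros Hl Hp P [eps He].
  unfold filtermap.
  assert (Hb : F (fun x => ball 0 eps (h x))) by exact (Hl (ball 0 eps) (locally_ball 0 eps)).
  generalize (filter_and _ _ Hb Hp). apply filter_imp.
  intros x [H1 H2]. apply He; auto.
Qed.

Lemma to_at_left {T} (F : (T -> Prop) -> Prop) {FF : Filter F} (h : T -> R) :
  filterlim h F (locally 0) -> F (fun x => h x < 0) -> filterlim h F (at_left 0).
Proof.
  intros Hl Hp P [eps He].
  unfold filtermap.
  assert (Hb : F (fun x => ball 0 eps (h x))) by exact (Hl (ball 0 eps) (locally_ball 0 eps)).
  generalize (filter_and _ _ Hb Hp). apply filter_imp.
  intros x [H1 H2]. apply He; auto.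
Qed.

Definition sK (K r : R) := K * r ^ 2 + sqrt 3 / 2.

Lemma sK_cont (K r : R) : continuous (sK K) r.
Proof. apply (@ex_derive_continuous R_AbsRing R_NormedModule). unfold sK. auto_derive. auto. Qed.

Lemma h_cont (K rb : R) : (sK K rb) ^ 2 = 1 ->
  filterlim (fun r => sqrt (1 - (sK K r) ^ 2) * / sK K r) (locally rb) (locally 0).
Proof.
  intros H1.
  replace 0 with (sqrt (1 - (sK K rb) ^ 2) * / sK K rb).
  2:{ rewrite H1. replace (1 - 1) with 0 by ring. rewrite sqrt_0. ring. }
  apply (continuous_mult (fun r => sqrt (1 - sK K r ^ 2)) (fun r => / sK K r)).
  - apply continuous_sqrt_comp. apply (@ex_derive_continuous R_AbsRing R_NormedModule). unfold sK. auto_derive. auto.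
  - apply (@ex_derive_continuous R_AbsRing R_NormedModule). unfold sK in *. auto_derive.
    intro E. replace (K * (rb * (rb * 1)) + sqrt 3 / 2) with (K * rb ^ 2 + sqrt 3 / 2) in E by ring. rewrite E in H1. lra.
Qed.

Lemma Wk_inv (K r : R) : Wk K r = / (sqrt (1 - (sK K r) ^ 2) * / sK K r).
Proof.
  unfold Wk, Sf, sK. rewrite Rinv_mult, Rinv_inv. unfold Rdiv. ring.
Qed.

Lemma h_pos (s : R) : 0 < s < 1 -> 0 < sqrt (1 - s ^ 2) * / s.
Proof.
  intros H. apply Rmult_lt_0_compat.
  - apply sqrt_lt_R0. nra.
  - apply Rinv_0_lt_compat. lra.
Qed.

Lemma h_neg (s : R) : -1 < s < 0 -> sqrt (1 - s ^ 2) * / s < 0.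
Proof.
  intros H. assert (0 < sqrt (1 - s ^ 2)) by (apply sqrt_lt_R0; nra).
  assert (/ s < 0) by (apply Rinv_lt_0_compat; lra). nra.
Qed.

Lemma blow_p (K rb : R) : 0 < K -> 0 < rb -> sK K rb = 1 ->
  filterlim (Wk K) (at_left rb) (Rbar_locally p_infty).
Proof.
  intros HK Hrb Hs.
  apply filterlim_ext with (fun r => / (sqrt (1 - (sK K r) ^ 2) * / sK K r)).
  { intros; symmetry; apply Wk_inv. }
  apply filterlim_comp with (at_right 0); [|exact filterlim_Rinv_0_right].
  apply (to_at_right (at_left rb)).
  - apply (filterlim_filter_le_1 (F := locally rb)).
    + apply filter_le_within.
    + apply h_cont. rewrite Hs. ring.
  - exists (mkposreal rb Hrb). intros y Hb Hy.
    change (Rabs (y - rb) < rb) in Hb. apply Rabs_def2 in Hb.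
    apply h_pos. unfold sK in *. pose proof s3_pos.
    assert (K * y ^ 2 < K * rb ^ 2) by (apply Rmult_lt_compat_l; auto; simpl; nra).
    split; nra.
Qed.

Lemma blow_m (K rb : R) : K < 0 -> 0 < rb -> sK K rb = -1 ->
  filterlim (Wk K) (at_left rb) (Rbar_locally m_infty).
Proof.
  intros HK Hrb Hs.
  apply filterlim_ext with (fun r => / (sqrt (1 - (sK K r) ^ 2) * / sK K r)).
  { intros; symmetry; apply Wk_inv. }
  apply filterlim_comp with (at_left 0); [|exact filterlim_Rinv_0_left].
  apply (to_at_left (at_left rb)).
  - apply (filterlim_filter_le_1 (F := locally rb)).
    + apply filter_le_within.
    + apply h_cont. rewrite Hs. ring.
  - assert (Hc : at_left rb (fun y => ball (-1) (mkposreal (1/2) ltac:(lra)) (sK K y))).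
    { apply filter_le_within. rewrite <- Hs. apply (sK_cont K rb).
      apply locally_ball. }
    assert (Hd : at_left rb (fun y => 0 < y < rb)).
    { exists (mkposreal rb Hrb). intros y Hb Hy.
      change (Rabs (y - rb) < rb) in Hb. apply Rabs_def2 in Hb. lra. }
    generalize (filter_and _ _ Hc Hd). apply filter_imp.
    intros y [Hb Hy]. change (Rabs (sK K y - -1) < 1/2) in Hb. apply Rabs_def2 in Hb.
    apply h_neg. unfold sK in *. pose proof s3_pos.
    assert (0 < (rb - y) * (rb + y)) by (apply Rmult_lt_0_compat; lra).
    assert (K * rb ^ 2 < K * y ^ 2) by (simpl; nra).
    split; nra.
Qed.

Lemma S_cont (s : R) : -1 < s < 1 -> continuous Sf s.
Proof.
  intros H. apply (@ex_derive_continuous R_AbsRing R_NormedModule).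
  unfold Sf. auto_derive. split; [nra|]. split; auto.
  apply Rgt_not_eq, sqrt_lt_R0. nra.
Qed.

Lemma c_bounds : -1 < sqrt 3 / 2 < 1.
Proof. pose proof s3_pos; pose proof s3_lt2. lra. Qed.

Lemma Wk_right0 (K : R) : filterlim (Wk K) (at_right 0) (locally (sqrt 3)).
Proof.
  apply (filterlim_filter_le_1 (F := locally 0)); [apply filter_le_within|].
  replace (sqrt 3) with (Wk K 0) by (unfold Wk; replace (K * 0 ^ 2 + sqrt 3 / 2) with (sqrt 3 / 2) by ring; apply S_c).
  unfold Wk.
  apply (continuous_comp (fun r => K * r ^ 2 + sqrt 3 / 2) Sf).
  - apply (sK_cont K 0).
  - replace (K * 0 ^ 2 + sqrt 3 / 2) with (sqrt 3 / 2) by ring. apply S_cont, c_bounds.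
Qed.

Lemma inf_lim (k : R) :
  filterlim (fun y => Sf (k / y ^ 2 + sqrt 3 / 2)) (Rbar_locally p_infty) (locally (sqrt 3)).
Proof.
  apply filterlim_comp with (locally (sqrt 3 / 2)).
  2:{ pose proof (S_cont _ c_bounds) as Hc. unfold continuous in Hc. rewrite S_c in Hc. exact Hc. }
  assert (H : is_lim (fun y => k * (/ y * / y) + sqrt 3 / 2) p_infty (k * (0 * 0) + sqrt 3 / 2)).
  { apply is_lim_plus'; [|apply is_lim_const].
    apply (is_lim_mult (fun _ => k) (fun y => / y * / y) p_infty k (0 * 0)).
    - apply is_lim_const.
    - apply (is_lim_mult (fun y => / y) (fun y => / y) p_infty 0 0).
      + apply (is_lim_inv (fun y => y) p_infty p_infty); [apply is_lim_id| discriminate].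
      + apply (is_lim_inv (fun y => y) p_infty p_infty); [apply is_lim_id| discriminate].
      + simpl. auto.
    - simpl. auto. }
  replace (k * (0 * 0) + sqrt 3 / 2) with (sqrt 3 / 2) in H by ring.
  apply (filterlim_ext_loc (fun y => k * (/ y * / y) + sqrt 3 / 2)); [|exact H].
  exists 0. intros y Hy. field. lra.
Qed.

Lemma S_gt (s : R) : sqrt 3 / 2 < s < 1 -> sqrt 3 < Sf s.
Proof.
  intros H. pose proof s3_pos; pose proof s3_sq.
  assert (HU : 0 < sqrt (1 - s ^ 2)) by (apply sqrt_lt_R0; nra).
  assert (HUU : sqrt (1 - s ^ 2) * sqrt (1 - s ^ 2) = 1 - s ^ 2) by (apply sqrt_sqrt; nra).
  set (U := sqrt (1 - s ^ 2)) in *. unfold Sf. fold U.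
  apply Rmult_lt_reg_r with U; auto. unfold Rdiv. rewrite Rmult_assoc, Rinv_l by lra.
  assert (2 * s > sqrt 3) by lra.
  assert (0 < (2 * s - sqrt 3) * (2 * s + sqrt 3)) by (apply Rmult_lt_0_compat; lra).
  assert (4 * s ^ 2 > 3) by nra.
  assert (0 < sqrt 3 * U) by nra.
  assert (sqrt 3 * U * (sqrt 3 * U) = 3 * (1 - s ^ 2)) by (rewrite <- HUU; nra).
  assert (0 < (s - sqrt 3 * U) * (s + sqrt 3 * U)) by nra.
  assert (0 < s - sqrt 3 * U) by nra. lra.
Qed.

Lemma S_lt (s : R) : -1 < s < sqrt 3 / 2 -> Sf s < sqrt 3.
Proof.
  intros H. pose proof s3_pos; pose proof s3_sq.
  pose proof s3_lt2.
  assert (Hq : 0 < (1 - s) * (1 + s)) by (apply Rmult_lt_0_compat; lra).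
  assert (HU : 0 < sqrt (1 - s ^ 2)) by (apply sqrt_lt_R0; nra).
  assert (HUU : sqrt (1 - s ^ 2) * sqrt (1 - s ^ 2) = 1 - s ^ 2) by (apply sqrt_sqrt; nra).
  set (U := sqrt (1 - s ^ 2)) in *. unfold Sf. fold U.
  apply Rmult_lt_reg_r with U; auto. unfold Rdiv. rewrite Rmult_assoc, Rinv_l by lra.
  destruct (Rle_dec s 0). { nra. }
  assert (0 < (sqrt 3 - 2 * s) * (2 * s + sqrt 3)) by (apply Rmult_lt_0_compat; lra).
  assert (4 * s ^ 2 < 3) by nra.
  assert (0 < sqrt 3 * U) by nra.
  assert (sqrt 3 * U * (sqrt 3 * U) = 3 * (1 - s ^ 2)) by (rewrite <- HUU; nra).
  assert (0 < (sqrt 3 * U - s) * (s + sqrt 3 * U)) by nra.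
  assert (0 < sqrt 3 * U - s) by nra. lra.
Qed.

Lemma w2_eq (rho r : R) : 0 < rho -> w2 rho r = Wk (/ rho ^ 2) r.
Proof.
  intros H. unfold w2, Wk.
  rewrite <- (S_ratio (r ^ 2 + sqrt 3 / 2 * rho ^ 2) (rho ^ 2)); [|apply pow_lt; auto|ring].
  f_equal. field. lra.
Qed.

Lemma w3_eq (a r : R) : 0 < a -> w3 a r = Wk (- (sqrt 3 / 2) / a ^ 2) r.
Proof.
  intros H. unfold w3, Wk.
  rewrite <- (S_ratio (- sqrt 3 * (r ^ 2 - a ^ 2)) (2 * a ^ 2)).
  - f_equal. field. lra.
  - assert (0 < a ^ 2) by (apply pow_lt; auto). lra.
  - replace ((- sqrt 3 * (r ^ 2 - a ^ 2)) ^ 2) with ((sqrt 3 * sqrt 3) * (r ^ 2 - a ^ 2) ^ 2) by ring.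
    rewrite s3_sq. ring.
Qed.

Lemma w3rho_eq (rho r : R) : 0 < rho -> w3rho rho r = Wk (- / rho ^ 2) r.
Proof.
  intros H. unfold w3rho, Wk.
  rewrite <- (S_ratio (- (r ^ 2 - sqrt 3 / 2 * rho ^ 2)) (rho ^ 2)); [|apply pow_lt; auto|ring].
  f_equal. field. lra.
Qed.

Lemma sq_sqrt_mul (q x : R) : 0 <= q -> (sqrt q * x) ^ 2 = q * x ^ 2.
Proof.
  intros H. replace ((sqrt q * x) ^ 2) with ((sqrt q * sqrt q) * x ^ 2) by ring.
  rewrite sqrt_sqrt; auto.
Qed.

Lemma lt_of_sq (r m : R) : 0 <= m -> r ^ 2 < m ^ 2 -> r < m.
Proof. intros. nra. Qed.

Lemma Fode_s3 : Fode (sqrt 3) = 0.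
Proof.
  unfold Fode. replace (1 + sqrt 3 ^ 2) with (2 ^ 2) by (replace (sqrt 3 ^ 2) with (sqrt 3 * sqrt 3) by ring; rewrite s3_sq; ring).
  rewrite sqrt_cube by nra. rewrite sqrt_pow2 by lra.
  replace (sqrt 3 ^ 3) with ((sqrt 3 * sqrt 3) * sqrt 3) by ring. rewrite s3_sq. ring.
Qed.

Lemma part_class : forall (a b : Rbar) (w : R -> R), adm_interval a b -> sol_on a b w ->
     (forall r : R, Rbar_lt a r -> Rbar_lt r b -> w r = sqrt 3)
     \/ (exists rho0 : R, 0 < rho0 /\ Rbar_le b (Finite (r0 rho0)) /\
           forall r : R, Rbar_lt a r -> Rbar_lt r b -> w r = w2 rho0 r)
     \/ (exists a0 : R, 0 < a0 /\ Rbar_le b (Finite (bnd a0)) /\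
           forall r : R, Rbar_lt a r -> Rbar_lt r b -> w r = w3 a0 r).
Proof.
  intros a b w [Ha Hab] Hs.
  destruct a as [a| |]; simpl in Ha; [|simpl in Hab; destruct b; contradiction|contradiction].
  destruct (classify a b w Ha Hab Hs) as [K HK].
  pose proof s3_pos; pose proof s3_lt2; pose proof s3_sq.
  destruct (Rtotal_order K 0) as [Kn|[K0|Kp]].
  - right; right.
    set (q := - (sqrt 3 / 2) / K).
    assert (Hq : 0 < q).
    { unfold q. replace (-(sqrt 3/2)/K) with ((sqrt 3/2) * / (-K)) by (field; lra).
      apply Rmult_lt_0_compat; [lra| apply Rinv_0_lt_compat; lra]. }
    exists (sqrt q). split; [apply sqrt_lt_R0; auto|]. 
    assert (Hsq : sqrt q ^ 2 = q) by (apply pow2_sqrt; lra).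
    assert (EK : - (sqrt 3 / 2) / sqrt q ^ 2 = K) by (rewrite Hsq; unfold q; field; lra).
    split.
    + apply (Rbar_bound a); auto. intros r Hr Hrb. destruct (HK r Hr Hrb) as [Hd _].
      apply lt_of_sq. { unfold bnd. apply Rmult_le_pos; apply sqrt_pos. }
      unfold bnd. rewrite sq_sqrt_mul by (apply Rmult_le_pos; [lra|left; apply Rinv_0_lt_compat; lra]).
      rewrite Hsq. unfold q.
      apply Rmult_lt_reg_l with (-K); [lra|].
      replace (- K * ((2 + sqrt 3) / sqrt 3 * (- (sqrt 3 / 2) / K))) with ((2 + sqrt 3) / 2) by (field; lra).
      lra.
    + intros r Hr Hrb. destruct (HK r Hr Hrb) as [_ E]. rewrite E, w3_eq, EK; auto.
      apply sqrt_lt_R0; auto.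
  - left. intros r Hr Hrb. destruct (HK r Hr Hrb) as [_ E]. rewrite E. subst K.
    unfold Wk. replace (0 * r ^ 2 + sqrt 3 / 2) with (sqrt 3 / 2) by ring. apply S_c.
  - right; left.
    set (q := / K).
    assert (Hq : 0 < q) by (apply Rinv_0_lt_compat; auto).
    exists (sqrt q). split; [apply sqrt_lt_R0; auto|]. 
    assert (Hsq : sqrt q ^ 2 = q) by (apply pow2_sqrt; lra).
    assert (EK : / sqrt q ^ 2 = K) by (rewrite Hsq; unfold q; field; lra).
    split.
    + apply (Rbar_bound a); auto. intros r Hr Hrb. destruct (HK r Hr Hrb) as [Hd _].
      apply lt_of_sq. { unfold r0. apply Rmult_le_pos; apply sqrt_pos. }
      unfold r0. rewrite sq_sqrt_mul by lra.
      rewrite Hsq. unfold q.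
      apply Rmult_lt_reg_l with K; [lra|].
      replace (K * ((2 - sqrt 3) / 2 * / K)) with ((2 - sqrt 3) / 2) by (field; lra).
      lra.
    + intros r Hr Hrb. destruct (HK r Hr Hrb) as [_ E]. rewrite E, w2_eq, EK; auto.
      apply sqrt_lt_R0; auto.
Qed.

Lemma r0_sq (rho : R) : 0 < rho -> / rho ^ 2 * r0 rho ^ 2 + sqrt 3 / 2 = 1.
Proof.
  intros H. pose proof s3_lt2. unfold r0. rewrite sq_sqrt_mul by lra. field. lra.
Qed.

Lemma r0_pos (rho : R) : 0 < rho -> 0 < r0 rho.
Proof.
  intros H. pose proof s3_lt2. unfold r0. apply Rmult_lt_0_compat; auto.
  apply sqrt_lt_R0. lra.
Qed.

Lemma bnd_sq (a : R) : 0 < a -> - (sqrt 3 / 2) / a ^ 2 * bnd a ^ 2 + sqrt 3 / 2 = -1.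
Proof.
  intros H. pose proof s3_pos. unfold bnd. rewrite sq_sqrt_mul.
  - field. lra.
  - apply Rmult_le_pos; [lra| left; apply Rinv_0_lt_compat; lra].
Qed.

Lemma bnd_pos (a : R) : 0 < a -> 0 < bnd a.
Proof.
  intros H. pose proof s3_pos. unfold bnd. apply Rmult_lt_0_compat; auto.
  apply sqrt_lt_R0. apply Rmult_lt_0_compat; [lra|apply Rinv_0_lt_compat; lra].
Qed.

Lemma dom_lt (K rb r : R) : 0 < rb -> 0 < r < rb -> (K * rb ^ 2 + sqrt 3 / 2 = 1 \/ K * rb ^ 2 + sqrt 3 / 2 = -1) ->
  -1 < K * r ^ 2 + sqrt 3 / 2 < 1.
Proof.
  intros Hb Hr HK. pose proof s3_pos; pose proof s3_lt2.
  assert (0 < (rb - r) * (rb + r)) by (apply Rmult_lt_0_compat; lra).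
  assert (0 < r ^ 2) by (apply pow_lt; lra).
  destruct HK as [HK|HK].
  - assert (0 < K) by (destruct (Rle_dec K 0); [assert (K * rb ^ 2 <= 0) by (simpl; nra); lra|lra]).
    split; [nra|]. simpl in *; nra.
  - assert (K < 0) by (destruct (Rle_dec 0 K); [assert (0 <= K * rb ^ 2) by (simpl; nra); lra|lra]).
    split; [simpl in *; nra|nra].
Qed.

Theorem theorem4p3 :
  (forall (a b : Rbar) (w : R -> R), adm_interval a b -> sol_on a b w ->
     (forall r : R, Rbar_lt a r -> Rbar_lt r b -> w r = sqrt 3)
     \/ (exists rho0 : R, 0 < rho0 /\ Rbar_le b (Finite (r0 rho0)) /\
           forall r : R, Rbar_lt a r -> Rbar_lt r b -> w r = w2 rho0 r)
     \/ (exists a0 : R, 0 < a0 /\ Rbar_le b (Finite (bnd a0)) /\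
           forall r : R, Rbar_lt a r -> Rbar_lt r b -> w r = w3 a0 r))
  /\
  sol_on (Finite 0) p_infty (fun _ => sqrt 3)
  /\
  (forall rho0 : R, 0 < rho0 ->
     sol_on (Finite 0) (Finite (r0 rho0)) (w2 rho0)
     /\ (forall r : R, 0 < r < r0 rho0 -> sqrt 3 < w2 rho0 r)
     /\ filterlim (w2 rho0) (at_right 0) (Rbar_locally (Finite (sqrt 3)))
     /\ filterlim (w2 rho0) (at_left (r0 rho0)) (Rbar_locally p_infty))
  /\
  (forall r : R, 0 < r ->
     filterlim (fun rho0 => w2 rho0 r) (Rbar_locally p_infty)
               (Rbar_locally (Finite (sqrt 3))))
  /\
  (forall a0 rho0 : R, 0 < a0 -> 0 < rho0 -> a0 ^ 2 = sqrt 3 / 2 * rho0 ^ 2 ->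
     (forall r : R, w3 a0 r = w3rho rho0 r) /\ bnd a0 = bnd_rho rho0)
  /\
  (forall a0 : R, 0 < a0 ->
     sol_on (Finite 0) (Finite (bnd a0)) (w3 a0)
     /\ w3 a0 a0 = 0
     /\ (forall r : R, 0 < r < bnd a0 -> w3 a0 r < sqrt 3)
     /\ filterlim (w3 a0) (at_right 0) (Rbar_locally (Finite (sqrt 3)))
     /\ filterlim (w3 a0) (at_left (bnd a0)) (Rbar_locally m_infty))
  /\
  (forall r : R, 0 < r ->
     filterlim (fun a0 => w3 a0 r) (Rbar_locally p_infty)
               (Rbar_locally (Finite (sqrt 3)))).
Proof.
  pose proof s3_pos; pose proof s3_lt2; pose proof s3_sq.
  split; [exact part_class|].
  split.
  { intros r Hr _. simpl in Hr. rewrite Fode_s3. replace (0 / r) with 0 by (field; lra).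
    apply (is_derive_const (sqrt 3) r). }
  split.
  { intros rho Hrho.
    assert (Hd : forall r, 0 < r < r0 rho -> -1 < / rho ^ 2 * r ^ 2 + sqrt 3 / 2 < 1).
    { intros r Hr. apply (dom_lt _ (r0 rho)); auto using r0_pos. left; apply r0_sq; auto. }
    assert (Hext : forall t, Wk (/ rho ^ 2) t = w2 rho t) by (intro t; symmetry; apply w2_eq; auto).
    split; [|split; [|split]].
    - intros r Q1 Q2. simpl in Q1, Q2.
      apply (is_derive_ext (Wk (/ rho ^ 2))); auto.
      rewrite <- Hext. apply Wk_derive; auto.
    - intros r Hr. rewrite w2_eq by auto. unfold Wk. apply S_gt.
      split; [|apply Hd; auto]. assert (0 < / rho ^ 2 * r ^ 2); [|lra].
      apply Rmult_lt_0_compat; [apply Rinv_0_lt_compat|]; apply pow_lt; lra.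
    - apply (filterlim_ext (Wk (/ rho ^ 2))); auto. apply Wk_right0.
    - apply (filterlim_ext (Wk (/ rho ^ 2))); auto. apply blow_p; auto using r0_pos.
      + apply Rinv_0_lt_compat, pow_lt; auto.
      + unfold sK. apply r0_sq; auto. }
  split.
  { intros r Hr. apply (filterlim_ext_loc (fun y => Sf (r ^ 2 / y ^ 2 + sqrt 3 / 2))).
    - exists 0. intros y Hy. rewrite w2_eq by auto. unfold Wk. f_equal. field. lra.
    - apply inf_lim. }
  split.
  { intros a0 rho Ha Hr E. split.
    - intros r. rewrite w3_eq, w3rho_eq by auto. f_equal. rewrite E. field. lra.
    - unfold bnd, bnd_rho.
      assert (Hp1 : 0 <= (2 + sqrt 3) / sqrt 3) by (apply Rmult_le_pos; [lra|left; apply Rinv_0_lt_compat; lra]).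
      assert (Hp2 : 0 <= (2 + sqrt 3) / 2) by lra.
      apply Rsqr_inj.
      + apply Rmult_le_pos; [apply sqrt_pos|lra].
      + apply Rmult_le_pos; [apply sqrt_pos|lra].
      + rewrite !Rsqr_pow2, !sq_sqrt_mul by auto. rewrite E. field. lra. }
  split.
  { intros a0 Ha. set (K := - (sqrt 3 / 2) / a0 ^ 2).
    assert (Hd : forall r, 0 < r < bnd a0 -> -1 < K * r ^ 2 + sqrt 3 / 2 < 1).
    { intros r Hr. apply (dom_lt _ (bnd a0)); auto using bnd_pos. right; apply bnd_sq; auto. }
    assert (Hext : forall t, Wk K t = w3 a0 t) by (intro t; symmetry; apply w3_eq; auto).
    assert (HK : K < 0).
    { unfold K. replace (- (sqrt 3 / 2) / a0 ^ 2) with (- ((sqrt 3 / 2) * / a0 ^ 2)) by (field; lra).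
      assert (0 < sqrt 3 / 2 * / a0 ^ 2); [|lra].
      apply Rmult_lt_0_compat; [lra| apply Rinv_0_lt_compat, pow_lt; lra]. }
    split; [|split; [|split; [|split]]].
    - intros r Q1 Q2. simpl in Q1, Q2.
      apply (is_derive_ext (Wk K)); auto.
      rewrite <- Hext. apply Wk_derive; auto.
    - unfold w3, Rdiv. ring.
    - intros r Hr. rewrite <- Hext. unfold Wk. apply S_lt.
      split; [apply Hd; auto|]. assert (0 < r ^ 2) by (apply pow_lt; lra).
      assert (K * r ^ 2 < 0); [|lra]. nra.
    - apply (filterlim_ext (Wk K)); auto. apply Wk_right0.
    - apply (filterlim_ext (Wk K)); auto. apply blow_m; auto using bnd_pos.
      unfold sK. apply bnd_sq; auto. }
  { intros r Hr. apply (filterlim_ext_loc (fun y => Sf (- (sqrt 3 / 2) * r ^ 2 / y ^ 2 + sqrt 3 / 2))).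
    - exists 0. intros y Hy. rewrite w3_eq by auto. unfold Wk. f_equal. field. lra.
    - apply inf_lim. }
Qed.
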